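(* Let $X$ be a connected CW complex with fundamental group $G$ and universal cover $\widetilde X$ (with the induced cell structure), and let $\alpha\in C^k(\widetilde X;\mathbb{R})$ be a cellular cocycle. Suppose there is $\Lambda\ge0$ such that $|\alpha(c)|\le\Lambda\,\|\partial c\|_1$ for every cellular chain $c\in C_k(\widetilde X;\mathbb{R})$. Then $\alpha$ is bounded on orbits and $[\alpha]=0\in H^k_{(\infty)}(X;\mathbb{R})$. Moreover, if the $(k-1)$-skeleton of $X$ is finite, the converse holds: if $\alpha$ is a cellular cocycle bounded on orbits with $[\alpha]=0$ in $H^k_{(\infty)}(X;\mathbb{R})$, then such a $\Lambda$ exists.
   Context: $\|\cdot\|_1$ on cellular chains of $\widetilde X$ is the $\ell^1$-norm with respect to the basis of cells. $G$ acts on cells of $\widetilde X$ by covering transformations. A cellular real cochain on $\widetilde X$ is bounded on orbits if for every cell $e$ the set $\{\alpha(g\cdot e):g\in G\}$ is bounded. $H^\bullet_{(\infty)}(X;\mathbb{R})$ is (canonically isomorphic to) the cohomology of the complex of real cellular cochains on $\widetilde X$ bounded on orbits; equivalently $H^\bullet(X;\ell^\infty(G,\mathbb{R}))$ with $\ell^\infty(G,\mathbb{R})$ the bounded real functions on $G$ with action $(g f)(h)=f(g^{-1}h)$. *)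

(* Defs.v *)
From HB Require Import structures.
From mathcomp Require Import all_boot all_order all_algebra.
From mathcomp Require Import monoid.
From mathcomp Require Import reals.
Set Implicit Arguments. Unset Strict Implicit. Unset Printing Implicit Defensive.
Import Order.TTheory GRing.Theory Num.Theory.
Local Open Scope ring_scope.

(* The cellular chain complex of the universal cover tilde X of a CW complex X,
   together with the action of G = pi_1(X) by covering transformations, which
   permutes cells freely. The boundary of a
   0-chain is 0 (unaugmented cellular chain complex). *)
Record GCellComplex (G : groupType) := {
  cell : nat -> eqType;
  act : forall n, G -> cell n -> cell n;
  act1 : forall n (e : cell n), act 1%g e = e;
  actM : forall n (g h : G) (e : cell n), act (g * h)%g e = act g (act h e);
  act_free : forall n (g : G) (e : cell n), act g e = e -> g = 1%g;
  bd : forall n, cell n.+1 -> seq (int * cell n);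
  bd_equiv : forall n (g : G) (e : cell n.+1) (f : cell n),
     \sum_(q <- bd (act g e) | q.2 == act g f) q.1
     = \sum_(q <- bd e | q.2 == f) q.1;
  bd_bd : forall n (e : cell n.+2) (f : cell n),
     \sum_(p <- bd e) p.1 * \sum_(q <- bd p.2 | q.2 == f) q.1 = 0
}.

Section Chains.
Variables (G : groupType) (X : GCellComplex G) (R : realType).

Definition chain n := seq (R * cell X n).

Definition coeff n (c : chain n) (x : cell X n) : R :=
  \sum_(p <- c | p.2 == x) p.1.

Definition norm1 n (c : chain n) : R :=
  \sum_(x <- undup (map snd c)) `|coeff c x|.

Definition eval n (a : cell X n -> R) (c : chain n) : R :=
  \sum_(p <- c) p.1 * a p.2.

Definition chain_bd n (c : chain n.+1) : chain n :=
  flatten [seq [seq (p.1 * q.1%:~R, q.2) | q <- bd p.2] | p <- c].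

Definition bd_norm k : chain k -> R :=
  match k return chain k -> R with
  | 0 => fun _ => 0
  | n.+1 => fun c => norm1 (chain_bd c)
  end.

Definition cobd n (b : cell X n -> R) (e : cell X n.+1) : R :=
  \sum_(q <- bd e) q.1%:~R * b q.2.

Definition cocycle k (a : cell X k -> R) : Prop :=
  forall e : cell X k.+1, cobd a e = 0.

Definition bounded_on_orbits n (a : cell X n -> R) : Prop :=
  forall e : cell X n, exists M : R, forall g : G, `|a (act g e)| <= M.

(* [a] = 0 in H^k_(oo)(X;R): a is the coboundary of a cochain bounded
   on orbits (for k = 0 there are no (k-1)-cochains, so a = 0). *)
Definition linf_cohom_zero k : (cell X k -> R) -> Prop :=
  match k return (cell X k -> R) -> Prop with
  | 0 => fun a => forall e, a e = 0
  | n.+1 => fun a => exists b : cell X n -> R,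
              bounded_on_orbits b /\ forall e, a e = cobd b e
  end.

(* the (k-1)-skeleton of X = tilde X / G is finite: in every dimension
   n <= k-1 there are finitely many G-orbits of cells *)
Definition finite_skeleton_below k : Prop :=
  forall n, (n < k)%N -> exists s : seq (cell X n),
    forall e : cell X n, exists g : G, exists2 e0, e0 \in s & e = act g e0.

Definition ell1_bd_bounded k (a : cell X k -> R) : Prop :=
  exists Lambda : R, 0 <= Lambda /\
    forall c : chain k, `|eval a c| <= Lambda * bd_norm c.

End Chains.

(* Main.v *)
Require Import Defs.
From HB Require Import structures.
From mathcomp Require Import all_boot all_order all_algebra.
From mathcomp Require Import monoid reals boolp classical_sets.
From mathcomp Require Import ring lra.
Set Implicit Arguments. Unset Strict Implicit. Unset Printing Implicit Defensive.
Import Order.TTheory GRing.Theory Num.Theory.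
Local Open Scope ring_scope.

Section Gen.
Variables (G : groupType) (X : GCellComplex G) (R : realType).

Definition supp n (c : chain X R n) := map snd c.

Lemma sum_pred1_uniq (T : eqType) (L : seq T) (x : T) (F : T -> R) :
  uniq L -> \sum_(y <- L) (if x == y then F y else 0) = if x \in L then F x else 0.
Proof.
elim: L => [|y L IH] /=; first by rewrite big_nil.
move=> /andP[yL uL]; rewrite big_cons IH // in_cons.
case: (eqVneq x y) => [->|nxy] /=; first by rewrite (negbTE yL) addr0.
by rewrite add0r.
Qed.

Lemma regroup n (d : chain X R n) (F : R * cell X n -> R) (L : seq (cell X n)) :
  uniq L -> {subset supp d <= L} ->
  \sum_(p <- d) F p = \sum_(x <- L) \sum_(p <- d | p.2 == x) F p.
Proof.
move=> uL; elim: d => [|p d IH] sub.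
  by rewrite big_nil big1 // => x _; rewrite big_nil.
rewrite big_cons IH; last by move=> y yd; apply: sub; rewrite /supp /= in_cons yd orbT.
have pL : p.2 \in L by apply: sub; rewrite /supp /= in_cons eqxx.
rewrite [RHS](eq_bigr (fun x => (if p.2 == x then F p else 0) + \sum_(q <- d | q.2 == x) F q)); last first.
  by move=> x _; rewrite big_cons; case: ifP; rewrite ?add0r.
rewrite big_split /=; congr (_ + _).
by rewrite sum_pred1_uniq // pL.
Qed.

Lemma coeff_notin n (d : chain X R n) x : x \notin supp d -> coeff d x = 0.
Proof.
rewrite /coeff; elim: d => [|p d IH] /=; first by rewrite big_nil.
rewrite in_cons negb_or => /andP[nx nd]; rewrite big_cons IH //.
by rewrite eq_sym (negbTE nx).
Qed.

Lemma norm1E n (d : chain X R n) (L : seq (cell X n)) :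
  uniq L -> {subset supp d <= L} -> norm1 d = \sum_(x <- L) `|coeff d x|.
Proof.
move=> uL sub; rewrite (bigID (fun x => x \in supp d)) /=.
rewrite [X in _ + X]big1 ?addr0; last by move=> x /coeff_notin ->; rewrite normr0.
rewrite -big_filter /norm1; apply: perm_big.
apply: uniq_perm; first exact: undup_uniq.
  exact: filter_uniq.
by move=> x; rewrite mem_undup mem_filter; case xs: (x \in supp d) => //=; rewrite sub.
Qed.

Lemma norm1_coeff n (d d' : chain X R n) :
  (forall x, coeff d x = coeff d' x) -> norm1 d = norm1 d'.
Proof.
move=> E; set L := undup (supp d ++ supp d').
have uL : uniq L by exact: undup_uniq.
rewrite (norm1E (L := L)) ?(norm1E (d := d') (L := L)) //.
- by apply: eq_bigr => x _; rewrite E.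
- by move=> x xd; rewrite mem_undup mem_cat xd orbT.
- by move=> x xd; rewrite mem_undup mem_cat xd.
Qed.

Lemma coeff_cat n (d d' : chain X R n) x : coeff (d ++ d') x = coeff d x + coeff d' x.
Proof. by rewrite /coeff big_cat. Qed.

Definition sc n (r : R) (d : chain X R n) : chain X R n := [seq (r * p.1, p.2) | p <- d].

Lemma coeff_sc n r (d : chain X R n) x : coeff (sc r d) x = r * coeff d x.
Proof. by rewrite /coeff /sc big_map mulr_sumr. Qed.

Lemma coeff_nil n x : coeff ([::] : chain X R n) x = 0.
Proof. by rewrite /coeff big_nil. Qed.

Lemma coeff1 n (r : R) (y x : cell X n) : coeff [:: (r, y)] x = if y == x then r else 0.
Proof. by rewrite /coeff big_cons big_nil /=; case: ifP; rewrite ?addr0. Qed.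

Lemma norm1_nil n : norm1 ([::] : chain X R n) = 0.
Proof. by rewrite /norm1 /= big_nil. Qed.

Lemma norm1_cat n (d d' : chain X R n) : norm1 (d ++ d') <= norm1 d + norm1 d'.
Proof.
set L := undup (supp d ++ supp d').
have uL : uniq L by exact: undup_uniq.
have s1 : {subset supp d <= L} by move=> x xd; rewrite mem_undup mem_cat xd.
have s2 : {subset supp d' <= L} by move=> x xd; rewrite mem_undup mem_cat xd orbT.
have s3 : {subset supp (d ++ d') <= L} by move=> x; rewrite /supp map_cat mem_undup.
rewrite (norm1E uL s1) (norm1E uL s2) (norm1E uL s3).
rewrite -big_split /=; apply: ler_sum => x _; rewrite coeff_cat; exact: ler_normD.
Qed.

Lemma norm1_sc n r (d : chain X R n) : norm1 (sc r d) = `|r| * norm1 d.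
Proof.
rewrite (norm1E (L := undup (supp d))) ?undup_uniq //.
  rewrite /norm1 mulr_sumr; apply: eq_bigr => x _; by rewrite coeff_sc normrM.
by move=> x; rewrite mem_undup /supp /sc -map_comp.
Qed.

Lemma norm1_ge0 n (d : chain X R n) : 0 <= norm1 d.
Proof. by rewrite /norm1; apply: sumr_ge0 => x _. Qed.

Lemma eval_cat n (b : cell X n -> R) d d' : eval b (d ++ d') = eval b d + eval b d'.
Proof. by rewrite /eval big_cat. Qed.

Lemma eval_sc n (b : cell X n -> R) r d : eval b (sc r d) = r * eval b d.
Proof. by rewrite /eval /sc big_map mulr_sumr; apply: eq_bigr => p _; rewrite mulrA. Qed.

Lemma eval_nil n (b : cell X n -> R) : eval b [::] = 0.
Proof. by rewrite /eval big_nil. Qed.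

Lemma evalE n (b : cell X n -> R) d :
  eval b d = \sum_(x <- undup (supp d)) coeff d x * b x.
Proof.
rewrite /eval (regroup _ (L := undup (supp d))) ?undup_uniq //; last by move=> x; rewrite mem_undup.
apply: eq_bigr => x _; rewrite /coeff mulr_suml; apply: eq_bigr => p /eqP -> //.
Qed.

Lemma eval_bound n (b : cell X n -> R) (M : R) d :
  0 <= M -> (forall x, `|b x| <= M) -> `|eval b d| <= M * norm1 d.
Proof.
move=> M0 bM; rewrite evalE /norm1 mulr_sumr.
apply: le_trans (ler_norm_sum _ _ _) _; apply: ler_sum => x _.
by rewrite normrM mulrC ler_wpM2r.
Qed.

Lemma chain_bd_cat n (c c' : chain X R n.+1) : chain_bd (c ++ c') = chain_bd c ++ chain_bd c'.
Proof. by rewrite /chain_bd map_cat flatten_cat. Qed.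

Lemma coeff_bd_sc n r (c : chain X R n.+1) x : coeff (chain_bd (sc r c)) x = r * coeff (chain_bd c) x.
Proof.
elim: c => [|p c IH]; first by rewrite /chain_bd /= coeff_nil mulr0.
rewrite /sc map_cons -cat1s chain_bd_cat coeff_cat -/(sc r c) IH.
rewrite [in RHS](_ : p :: c = [:: p] ++ c) // chain_bd_cat coeff_cat mulrDr; congr (_ + _).
rewrite /chain_bd /= !cats0 /coeff !big_map mulr_sumr; apply: eq_bigr => q _ /=; by rewrite mulrA.
Qed.

Lemma eval_cobd n (b : cell X n -> R) (c : chain X R n.+1) : eval (cobd b) c = eval b (chain_bd c).
Proof.
elim: c => [|p c IH]; first by rewrite /chain_bd /= !eval_nil.
rewrite -cat1s chain_bd_cat !eval_cat IH; congr (_ + _).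
rewrite /eval big_cons big_nil addr0.
rewrite /chain_bd /= ?cats0 big_map /cobd mulr_sumr big_nil addr0; apply: eq_bigr => q _ /=.
by rewrite mulrA.
Qed.


Lemma actK n (g : G) (y : cell X n) : act (g^-1)%g (act g y) = y.
Proof. by rewrite -actM mulVg act1. Qed.

Lemma actKV n (g : G) (y : cell X n) : act g (act (g^-1)%g y) = y.
Proof. by rewrite -actM mulgV act1. Qed.

Lemma norm1_act n (g : G) (d d' : chain X R n) :
  (forall f, coeff d' (act g f) = coeff d f) -> norm1 d' = norm1 d.
Proof.
move=> E.
set L := undup (supp d' ++ map (act g) (supp d)).
have uL : uniq L by exact: undup_uniq.
have s1 : {subset supp d' <= L} by move=> x xd; rewrite mem_undup mem_cat xd.
have uL' : uniq (map (act (g^-1)%g) L).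
  by rewrite map_inj_uniq // => x y /(congr1 (act g)); rewrite !actKV.
have s2 : {subset supp d <= map (act (g^-1)%g) L}.
  move=> y yd; rewrite -[y](actK g); apply: map_f.
  by rewrite mem_undup mem_cat map_f ?orbT.
rewrite (norm1E uL s1) (norm1E uL' s2) big_map; apply: eq_bigr => x _.
by rewrite -E actKV.
Qed.

Lemma coeff_bd1 n (e : cell X n.+1) f :
  coeff (chain_bd [:: ((1 : R), e)]) f = (\sum_(q <- bd e | q.2 == f) q.1)%:~R.
Proof.
rewrite /chain_bd /= cats0 /coeff big_map.
elim: (bd e) => [|q l IH]; first by rewrite !big_nil.
rewrite !big_cons /= IH; case: ifP => // _; by rewrite mul1r intrD.
Qed.

Lemma norm1_bd_act n (g : G) (e : cell X n.+1) :
  norm1 (chain_bd [:: ((1 : R), act g e)]) = norm1 (chain_bd [:: ((1 : R), e)]).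
Proof. by apply: (norm1_act (g := g)) => f; rewrite !coeff_bd1 bd_equiv. Qed.


Lemma evalL n (b : cell X n -> R) d (L : seq (cell X n)) :
  uniq L -> {subset supp d <= L} -> eval b d = \sum_(x <- L) coeff d x * b x.
Proof.
move=> uL sub; rewrite /eval (regroup _ uL sub).
apply: eq_bigr => x _; rewrite /coeff mulr_suml; apply: eq_bigr => p /eqP -> //.
Qed.

Lemma eval_coeff n (b : cell X n -> R) (d d' : chain X R n) :
  (forall x, coeff d x = coeff d' x) -> eval b d = eval b d'.
Proof.
move=> E; set L := undup (supp d ++ supp d').
have uL : uniq L by exact: undup_uniq.
have s1 : {subset supp d <= L} by move=> x xd; rewrite mem_undup mem_cat xd.
have s2 : {subset supp d' <= L} by move=> x xd; rewrite mem_undup mem_cat xd orbT.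
rewrite (evalL _ uL s1) (evalL _ uL s2); apply: eq_bigr => x _; by rewrite E.
Qed.

Lemma supp_sc n r (d : chain X R n) : supp (sc r d) = supp d.
Proof. by rewrite /supp /sc -map_comp. Qed.

End Gen.

Section HB.
Variables (G : groupType) (X : GCellComplex G) (R : realType) (n : nat).
Variables (a : cell X n.+1 -> R) (Lam : R).
Hypothesis Lam0 : 0 <= Lam.
Hypothesis Hyp : forall c : chain X R n.+1, `|eval a c| <= Lam * norm1 (chain_bd c).

Definition good (S : cell X n -> Prop) (b : cell X n -> R) :=
  forall (c : chain X R n.+1) (d : chain X R n), (forall y, y \in supp d -> S y) ->
  `|eval a c + eval b d| <= Lam * norm1 (chain_bd c ++ d).


Section Ext.
Variables (S : cell X n -> Prop) (b : cell X n -> R) (x : cell X n).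
Hypothesis gb : good S b.
Hypothesis Sx : ~ S x.

Let N c d := norm1 (chain_bd c ++ d ++ [:: ((1 : R), x)]).
Let phi c d := eval a c + eval b d.
Let supS (d : chain X R n) := forall y, y \in supp d -> S y.

Lemma keyK c d c' d' : supS d -> supS d' ->
  - Lam * N c d - phi c d <= Lam * N c' d' - phi c' d'.
Proof.
move=> sd sd'.
have sdd : supS (d' ++ sc (-1) d).
  by move=> y; rewrite /supp map_cat mem_cat -/(supp _) -/(supp _) supp_sc => /orP[/sd'|/sd].
have := gb (c' ++ sc (-1) c) sdd.
rewrite !eval_cat !eval_sc.
have -> : norm1 (chain_bd (c' ++ sc (-1) c) ++ d' ++ sc (-1) d) =
  norm1 ((chain_bd c' ++ d' ++ [:: ((1 : R), x)]) ++ sc (-1) (chain_bd c ++ d ++ [:: ((1 : R), x)])).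
  apply: norm1_coeff => y.
  rewrite chain_bd_cat !coeff_cat !coeff_sc !coeff_cat coeff_bd_sc.
  rewrite ?coeff_cat; ring.
move=> H.
have H2 := norm1_cat (chain_bd c' ++ d' ++ [:: ((1 : R), x)]) (sc (-1) (chain_bd c ++ d ++ [:: ((1 : R), x)])).
rewrite norm1_sc normrN normr1 mul1r in H2.
have H3 : Lam * norm1 ((chain_bd c' ++ d' ++ [:: ((1 : R), x)]) ++ sc (-1) (chain_bd c ++ d ++ [:: ((1 : R), x)])) <= Lam * (N c' d' + N c d).
  by apply: ler_wpM2l.
have H4 := le_trans H H3.
have H5 := ler_norm (eval a c' + - (1) * eval a c + (eval b d' + - (1) * eval b d)).
rewrite /phi; move: (le_trans H5 H4); rewrite /N; set u := norm1 _; set v := norm1 _.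
move=> H6; rewrite mulrDr in H6; lra.
Qed.


Let E := [set v : R | exists c d, supS d /\ v = - Lam * N c d - phi c d]%classic.

Let supS_nil : supS [::]. Proof. by []. Qed.

Lemma E_has_sup : has_sup E.
Proof.
split; first by exists (- Lam * N [::] [::] - phi [::] [::]); exists [::], [::].
exists (Lam * N [::] [::] - phi [::] [::]) => v [c [d [sd ->]]].
exact: keyK.
Qed.

Definition tx := sup E.

Lemma tx_bound c d : supS d -> `|phi c d + tx| <= Lam * N c d.
Proof.
move=> sd.
have h1 : - Lam * N c d - phi c d <= tx.
  by apply: ub_le_sup; [case: E_has_sup | exists c, d].
have h2 : tx <= Lam * N c d - phi c d.
  apply: ge_sup; first by case: E_has_sup.
  by move=> v [c' [d' [sd' ->]]]; apply: keyK.
rewrite ler_norml; apply/andP; split; lra.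
Qed.

Definition bx y := if y == x then tx else b y.

Lemma coeff_filter (d : chain X R n) y :
  coeff (filter (fun p => p.2 != x) d) y = if y == x then 0 else coeff d y.
Proof.
rewrite /coeff big_filter_cond; case: (eqVneq y x) => [->|nyx].
  by rewrite big_pred0 // => p; case: (eqVneq p.2 x).
by apply: eq_bigl => p; case: (eqVneq p.2 y) => [->|]; rewrite ?andbF ?nyx.
Qed.

Lemma good_ext : good (fun y => S y \/ y = x) bx.
Proof.
move=> c d sd.
set dS := filter (fun p => p.2 != x) d.
set s := coeff d x.
have cE : forall y, coeff d y = coeff (dS ++ [:: (s, x)]) y.
  move=> y; rewrite coeff_cat coeff_filter coeff1.
  by case: (eqVneq y x) => [->|nyx]; rewrite ?eqxx ?add0r // ?addr0.
have sdS : supS dS.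
  move=> y /mapP[p]; rewrite mem_filter => /andP[px pd] ->.
  have [//|ex] := sd p.2 (map_f _ pd).
  by rewrite ex eqxx in px.
have evE : eval bx d = eval b dS + s * tx.
  rewrite (eval_coeff _ cE) eval_cat /eval big_cons big_nil addr0 /= /bx eqxx.
  congr (_ + _); rewrite /dS !big_filter; apply: eq_bigr => p px.
  by rewrite (negbTE px).
have nE : norm1 (chain_bd c ++ d) = norm1 (chain_bd c ++ dS ++ [:: (s, x)]).
  by apply: norm1_coeff => y; rewrite !coeff_cat cE coeff_cat.
rewrite evE nE.
case: (eqVneq s 0) => [s0|s0].
  rewrite s0 mul0r addr0.
  have -> : norm1 (chain_bd c ++ dS ++ [:: (0, x)]) = norm1 (chain_bd c ++ dS).
    by apply: norm1_coeff => y; rewrite !coeff_cat coeff1; case: ifP; rewrite addr0.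
  exact: gb.
have sdS' : supS (sc s^-1 dS) by move=> y; rewrite supp_sc; apply: sdS.
have := tx_bound (sc s^-1 c) sdS'.
rewrite /phi /N !eval_sc.
have -> : norm1 (chain_bd (sc s^-1 c) ++ sc s^-1 dS ++ [:: ((1 : R), x)]) =
   norm1 (sc s^-1 (chain_bd c ++ dS ++ [:: (s, x)])).
  apply: norm1_coeff => y; rewrite !coeff_cat !coeff_sc !coeff_cat coeff_bd_sc !coeff1.
  by case: ifP => _; field.
rewrite norm1_sc => H.
have H' : `|s| * `|s^-1 * eval a c + s^-1 * eval b dS + tx| <= `|s| * (Lam * (`|s^-1| * norm1 (chain_bd c ++ dS ++ [:: (s, x)]))).
  by apply: ler_wpM2l; [exact: normr_ge0 | exact: H].
move: H'; rewrite -normrM mulrDr mulrDr !mulrA divff // !mul1r.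
have e : `|s| * Lam * `|s^-1| = Lam.
  have ns : `|s| != 0 by rewrite normr_eq0.
  by rewrite normrV ?unitfE //; field.
by rewrite e addrA.
Qed.

End Ext.

Definition GT := {p : (cell X n -> Prop) * (cell X n -> R) | good p.1 p.2}.

Definition Rl (u v : GT) : bool :=
  `[< forall y, (sval u).1 y -> (sval v).1 y /\ (sval u).2 y = (sval v).2 y >].

Lemma good0 : good (fun _ => False) (fun _ => 0).
Proof.
move=> c [|p d] H; first by rewrite eval_nil addr0 cats0.
by exfalso; apply: (H p.2); rewrite /supp /= in_cons eqxx.
Qed.

Section Chain.
Variable A : set GT.
Hypothesis tot : total_on A Rl.

Definition Su y := exists u, A u /\ (sval u).1 y.
Definition bu y : R := match pselect (Su y) with
  | left h => (sval (sval (cid h))).2 y | right _ => 0 end.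

Lemma bu_eq u y : A u -> (sval u).1 y -> bu y = (sval u).2 y.
Proof.
move=> Au Suy; rewrite /bu; case: pselect => [h|nh]; last by exfalso; apply: nh; exists u.
have [Aw Sw] := svalP (cid h).
have [/asboolP H|/asboolP H] := tot Au Aw.
  by have [_ ->] := H y Suy.
by have [_ ->] := H y Sw.
Qed.

Lemma chain_cover (d : chain X R n) : (forall y, y \in supp d -> Su y) ->
  d = [::] \/ exists u, A u /\ forall y, y \in supp d -> (sval u).1 y.
Proof.
elim: d => [|p d IH] H; first by left.
right; have [u0 [Au0 S0]] := H p.2 (mem_head _ _).
have Hd : forall y, y \in supp d -> Su y.
  by move=> y yd; apply: H; rewrite /supp /= inE -/(supp d) yd orbT.
have [->|[u1 [Au1 S1]]] := IH Hd.
  by exists u0; split => // y; rewrite /supp /= inE => /eqP ->.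
have [/asboolP R01|/asboolP R10] := tot Au0 Au1.
  exists u1; split => // y; rewrite /supp /= inE => /orP[/eqP ->|/S1 //].
  by case: (R01 _ S0).
exists u0; split => // y; rewrite /supp /= inE => /orP[/eqP ->|/S1 h] //.
by case: (R10 _ h).
Qed.

Lemma good_u : good Su bu.
Proof.
move=> c d H; have [->|[u [Au Sd]]] := chain_cover H.
  by rewrite eval_nil addr0 cats0.
have -> : eval bu d = eval (sval u).2 d.
  rewrite /eval; apply: eq_big_seq => p pd; congr (_ * _).
  by apply: bu_eq => //; apply: Sd; apply: map_f.
by apply: (svalP u) => y /Sd.
Qed.

End Chain.

Lemma exists_ext : exists b : cell X n -> R,
  (forall y, `|b y| <= Lam) /\ forall e, a e = cobd b e.
Proof.
have [m Hm] : exists m : GT, premaximal (fun u v => Rl u v) m.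
  apply: (ZL_preorder (exist _ (_, _) good0)).
  - by move=> t; apply/asboolP => y Sy.
  - move=> r s t /asboolP H1 /asboolP H2; apply/asboolP => y Sy.
    have [Sy' e1] := H1 y Sy; have [Sy'' e2] := H2 y Sy'.
    by split => //; rewrite e1 e2.
  - move=> A tot; exists (exist _ (_, _) (good_u tot)) => s As; apply/asboolP => y Sy; split.
      by exists s.
    by rewrite /= (bu_eq tot As Sy).
have allS : forall y, (sval m).1 y.
    move=> y; case: (pselect ((sval m).1 y)) => // ny; exfalso.
    pose u : GT := exist _ (_, _) (good_ext (x := y) (svalP m)).
    have Rmu : Rl m u.
      apply/asboolP => z Sz; split; first by left.
      rewrite /= /bx; case: eqP => // ez; by rewrite ez in Sz.
    by have /asboolP /(_ y (or_intror erefl)) [] := Hm u Rmu.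
  set b := (sval m).2.
  have gm : good (fun _ => True) b by move=> c d _; apply: (svalP m) => y _; apply: allS.
  exists b; split.
    move=> y; have := gm [::] [:: ((1 : R), y)] (fun _ _ => I).
    rewrite /chain_bd /= eval_nil add0r /eval big_cons big_nil addr0 mul1r.
    by rewrite /norm1 /= big_cons big_nil coeff1 eqxx normr1 addr0 mulr1.
  move=> e; have := gm [:: ((1 : R), e)] (sc (-1) (chain_bd [:: ((1 : R), e)])) (fun _ _ => I).
  rewrite eval_sc -eval_cobd.
  have -> : norm1 (chain_bd [:: ((1 : R), e)] ++ sc (-1) (chain_bd [:: ((1 : R), e)])) = 0.
    rewrite -(norm1_nil X R n); apply: norm1_coeff => y.
    by rewrite coeff_cat coeff_sc coeff_nil mulN1r subrr.
  rewrite mulr0 normr_le0 /eval !big_cons !big_nil !addr0 !mul1r mulN1r subr_eq0.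
  by move/eqP.
Qed.

End HB.

Lemma eval_ext (G : groupType) (X : GCellComplex G) (R : realType) n (a b : cell X n -> R) c :
  (forall e, a e = b e) -> eval a c = eval b c.
Proof. by move=> E; rewrite /eval; apply: eq_bigr => p _; rewrite E. Qed.

Lemma eval1 (G : groupType) (X : GCellComplex G) (R : realType) n (a : cell X n -> R) e :
  eval a [:: ((1 : R), e)] = a e.
Proof. by rewrite /eval big_cons big_nil addr0 mul1r. Qed.

Lemma orbit_bound (G : groupType) (X : GCellComplex G) (R : realType) n (b : cell X n -> R)
  (s : seq (cell X n)) : bounded_on_orbits b ->
  exists M : R, 0 <= M /\ forall e0, e0 \in s -> forall g : G, `|b (act g e0)| <= M.
Proof.
move=> bb; elim: s => [|e0 s [M [M0 HM]]]; first by exists 0.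
have [M1 H1] := bb e0.
exists (Num.max M (Num.max M1 0)); split; first by rewrite le_max M0.
move=> e; rewrite inE => /orP[/eqP -> g|es g].
  by apply: le_trans (H1 g) _; rewrite !le_max lexx !orbT.
by apply: le_trans (HM e es g) _; rewrite le_max lexx.
Qed.

Unset Implicit Arguments.
Theorem mainTheorem5 (G : groupType) (X : GCellComplex G) (R : realType)
  (k : nat) (a : cell X k -> R) :
  cocycle a ->
  (ell1_bd_bounded a -> bounded_on_orbits a /\ linf_cohom_zero a) /\
  (finite_skeleton_below X k -> bounded_on_orbits a -> linf_cohom_zero a ->
     ell1_bd_bounded a).
Proof.
move=> _; case: k a => [|n] a.
  split.
    move=> [L [L0 HL]].
    have a0 : forall e, a e = 0.
      move=> e; have := HL [:: ((1 : R), e)]; rewrite /= mulr0 eval1.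
      by rewrite normr_le0 => /eqP.
    split=> // e; exists 0 => g; by rewrite a0 normr0.
  move=> _ _ a0; exists 0; split => // c.
  rewrite (eval_ext (b := fun _ => 0)) // /eval big1 ?normr0 ?mul0r // => p _.
  by rewrite mulr0.
split.
  move=> [L [L0 HL]].
  have [b [bL ab]] := exists_ext L0 HL.
  split.
    move=> e; exists (L * norm1 (chain_bd [:: ((1 : R), e)])) => g.
    rewrite ab -(eval1 (cobd b)) eval_cobd -(norm1_bd_act R g).
    exact: eval_bound.
  by exists b; split => // e; exists L.
move=> fs _ [b [bb ab]].
have [s Hs] := fs n (ltnSn n).
have [M [M0 HM]] := orbit_bound s bb.
have bM : forall e, `|b e| <= M.
  by move=> e; have [g [e0 e0s ->]] := Hs e; apply: HM.
exists M; split => // c; rewrite /= (eval_ext (b := cobd b)) // eval_cobd.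
exact: eval_bound.
Qed.
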